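(* Let $m\in\mathbb{Z}$. Then there exists $N$ (depending on $m$) such that for all $n\ge N$ the Hankel determinants $$\det\big(f(i+j,q^{2m+1},q)\big)_{i,j=0}^n,\quad \det\big(F(2i+2j,q^m,q)\big)_{i,j=0}^n,\quad \det\big(F(2i+2j+1,q^m,q)\big)_{i,j=0}^n,\quad \det\big(F(i+j,q^m,q)\big)_{i,j=0}^n$$ all vanish.
   Context: $q$ is an indeterminate; all quantities lie in $\mathbb{Q}(q)$. $(x;q)_n=\prod_{j=0}^{n-1}(1-q^jx)$. The Gaussian binomial coefficient is $\begin{bmatrix} n\\ j\end{bmatrix}_q=\frac{(q;q)_n}{(q;q)_j(q;q)_{n-j}}$ for $0\le j\le n$ and $0$ otherwise. The normalized Rogers–Szegö polynomials are $f(n,s,q)=\dfrac{\sum_{j=0}^n s^j\begin{bmatrix} n\\ j\end{bmatrix}_{q^2}}{(-q;q)_n}$ and $F(n,s,q)=\dfrac{\sum_{j=0}^n(-s)^j\begin{bmatrix} n\\ j\end{bmatrix}_{q}}{(q;q^2)_{\lfloor (n+1)/2\rfloor}}$ (for negative exponents, $q^{a}$ with $a<0$ is the element $1/q^{-a}$ of $\mathbb{Q}(q)$). *)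

(* Defs.v *)
From HB Require Import structures.
From mathcomp Require Import all_boot all_order all_algebra.
Set Implicit Arguments. Unset Strict Implicit. Unset Printing Implicit Defensive.
Import Order.TTheory GRing.Theory Num.Theory.
Local Open Scope ring_scope.

Definition Qq : fieldType := {fraction {poly rat}}.
Definition q : Qq := @tofrac _ ('X : {poly rat}).

Definition qpoch (x b : Qq) (n : nat) : Qq := \prod_(j < n) (1 - b ^+ j * x).

Definition gauss_binom (b : Qq) (n j : nat) : Qq :=
  if (j <= n)%N then qpoch b b n / (qpoch b b j * qpoch b b (n - j)) else 0.

Definition f (n : nat) (s : Qq) : Qq :=
  (\sum_(j < n.+1) s ^+ j * gauss_binom (q ^+ 2) n j) / qpoch (- q) q n.

Definition F (n : nat) (s : Qq) : Qq :=
  (\sum_(j < n.+1) (- s) ^+ j * gauss_binom q n j) / qpoch q (q ^+ 2) (n.+1)./2.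

(* Main.v *)
Require Import Defs.
From HB Require Import structures.
From mathcomp Require Import all_boot all_order all_algebra ring zify.
Import Order.TTheory GRing.Theory Num.Theory.
Local Open Scope ring_scope.
Local Open Scope ring_scope.

Ltac fld := field; repeat (apply/andP; split); try assumption.
Section Gen.
Variable K : fieldType.

Definition qp (a b : K) (n : nat) : K := \prod_(j < n) (1 - b ^+ j * a).
Definition gbK (b : K) (n j : nat) : K :=
  if (j <= n)%N then qp b b n / (qp b b j * qp b b (n - j)) else 0.

Section Gauss.
Variable b : K.
Hypothesis hb : forall k, (0 < k)%N -> 1 - b ^+ k != 0.
Local Notation Q := (qp b b).
Local Notation gb := (gbK b).

Lemma qpS n : Q n.+1 = Q n * (1 - b ^+ n.+1).
Proof. by rewrite /qp big_ord_recr /= exprSr. Qed.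
Lemma qp0 : Q 0 = 1.
Proof. by rewrite /qp big_ord0. Qed.
Lemma qp_neq0 n : Q n != 0.
Proof. elim: n => [|n IH]; first by rewrite qp0 oner_eq0.
rewrite qpS; apply: mulf_neq0; [exact: IH | exact: hb]. Qed.

Lemma gb_gt n j : (n < j)%N -> gb n j = 0.
Proof. by rewrite /gbK ltnNge => /negbTE ->. Qed.

Lemma gb_n0 n : gb n 0 = 1.
Proof. rewrite /gbK leq0n subn0 qp0 mul1r divff //; exact: qp_neq0. Qed.

Lemma gb_sym n j : (j <= n)%N -> gb n (n - j) = gb n j.
Proof.
move=> jn; rewrite /gbK leq_subr jn subKn //; congr (_ / _); exact: mulrC.
Qed.

Lemma gb_absorb n j : (1 - b ^+ j.+1) * gb n.+1 j.+1 = (1 - b ^+ n.+1) * gb n j.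
Proof.
rewrite /gbK ltnS; case: leqP => h; last by rewrite !mulr0.
rewrite subSS !qpS.
have := qp_neq0 n; have := qp_neq0 j; have := qp_neq0 (n - j).
have := @hb _ (ltn0Sn j); have := @hb _ (ltn0Sn n) => *.
by fld.
Qed.

Lemma gb_pascal n j : gb n.+1 j.+1 = b ^+ j.+1 * gb n j.+1 + gb n j.
Proof.
case: (ltngtP j n) => h.
- have [d ->] : exists d, n = (j + d.+1)%N by exists (n - j.+1)%N; rewrite addnS -addSn subnKC.
  rewrite /gbK.
  have -> : (j.+1 <= (j + d.+1).+1)%N by rewrite ltnS leq_addr.
  have -> : (j.+1 <= (j + d.+1))%N by rewrite addnS ltnS leq_addr.
  have -> : (j <= (j + d.+1))%N by rewrite leq_addr.
  rewrite subSS !addKn addnS -addSn addKn !qpS.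
  have eb : b ^+ (j + d.+1).+1 = b ^+ j.+1 * b ^+ d.+1 by rewrite -exprD addSn addnS.
  rewrite -addnS eb.
  have := qp_neq0 (j + d.+1); have := qp_neq0 j; have := qp_neq0 d.
  have := @hb _ (ltn0Sn j); have := @hb _ (ltn0Sn d) => *.
  by fld.
- by rewrite !gb_gt ?ltnS // ?mulr0 ?addr0 // ltnW.
- subst j; rewrite (@gb_gt n n.+1 (ltnSn n)) mulr0 add0r /gbK !leqnn !subnn qp0 !mulr1.
  by rewrite !divff //; exact: qp_neq0.
Qed.

Definition H n s := \sum_(j < n.+1) s ^+ j * gb n j.

Lemma H0 s : H 0 s = 1.
Proof. by rewrite /H big_ord_recl big_ord0 addr0 gb_n0 expr0 mulr1. Qed.

Lemma Hshift n s : H n.+1 (b * s) = H n.+1 s - s * (1 - b ^+ n.+1) * H n s.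
Proof.
apply/eqP; rewrite eq_sym subr_eq addrC -subr_eq; apply/eqP.
rewrite /H -sumrB big_ord_recl /ord0 /= !expr0 !mul1r gb_n0 subrr add0r mulr_sumr.
apply: eq_bigr => i _; rewrite /bump /= add1n.
have -> : s ^+ i.+1 * gb n.+1 i.+1 - (b * s) ^+ i.+1 * gb n.+1 i.+1
  = s ^+ i.+1 * ((1 - b ^+ i.+1) * gb n.+1 i.+1) by rewrite exprMn; ring.
rewrite gb_absorb exprS; ring.
Qed.

Lemma Hsplit n s : H n s = 1 + \sum_(i < n) s ^+ i.+1 * gb n i.+1.
Proof. by rewrite /H big_ord_recl /ord0 /= expr0 mul1r gb_n0. Qed.

Lemma sum_ext n s : \sum_(i < n.+1) s ^+ i.+1 * gb n i.+1 = \sum_(i < n) s ^+ i.+1 * gb n i.+1.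
Proof. by rewrite big_ord_recr /= (@gb_gt n n.+1 (ltnSn n)) mulr0 addr0. Qed.

Lemma Hpascal n s : H n.+1 s = H n (b * s) + s * H n s.
Proof.
rewrite Hsplit (Hsplit n (b * s)) -(sum_ext n (b * s)) -addrA; congr (_ + _).
rewrite /H mulr_sumr -big_split /=; apply: eq_bigr => i _.
rewrite gb_pascal exprMn exprS; ring.
Qed.

Lemma Hsym n (s : K) : s != 0 -> s ^+ n * H n s^-1 = H n s.
Proof.
move=> s0; rewrite /H (reindex_inj rev_ord_inj) /= mulr_sumr.
apply: eq_bigr => i _.
have hi : (i <= n)%N by rewrite -ltnS.
rewrite subSS (gb_sym n i hi) exprVn.
have -> : s ^+ n = s ^+ (n - i) * s ^+ i by rewrite -exprD subnK.
have := expf_neq0 (n - i) s0 => ?.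
by fld.
Qed.
End Gauss.

Definition GS (a : nat -> K) := exists (I : finType) (c y : I -> K),
  (forall t, y t != 0) /\ forall n, a n = \sum_t c t * y t ^+ n.

Lemma GS_ext {a1 a2} : (forall n, a1 n = a2 n) -> GS a1 -> GS a2.
Proof. move=> e [I [c [y [hy ha]]]]; exists I, c, y; split=> // n; by rewrite -e. Qed.

Lemma GS_geom (c y : K) : y != 0 -> GS (fun n => c * y ^+ n).
Proof.
move=> hy; exists 'I_1, (fun _ => c), (fun _ => y); split=> // n.
by rewrite big_ord1.
Qed.

Lemma GS_const (c : K) : GS (fun n => c).
Proof.
apply: (GS_ext _ (GS_geom c 1 (oner_neq0 K))) => n /=; by rewrite expr1n mulr1.
Qed.

Lemma GS_add {a1 a2} : GS a1 -> GS a2 -> GS (fun n => a1 n + a2 n).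
Proof.
move=> [I1 [c1 [y1 [hy1 ha1]]]] [I2 [c2 [y2 [hy2 ha2]]]].
exists (I1 + I2)%type, (fun t => match t with inl t => c1 t | inr t => c2 t end),
  (fun t => match t with inl t => y1 t | inr t => y2 t end); split.
  by case.
by move=> n; rewrite big_sumType /= ha1 ha2.
Qed.

Lemma GS_mul {a1 a2} : GS a1 -> GS a2 -> GS (fun n => a1 n * a2 n).
Proof.
move=> [I1 [c1 [y1 [hy1 ha1]]]] [I2 [c2 [y2 [hy2 ha2]]]].
exists (I1 * I2)%type, (fun t => c1 t.1 * c2 t.2), (fun t => y1 t.1 * y2 t.2); split.
  by move=> t; apply: mulf_neq0.
move=> n; rewrite ha1 ha2 big_distrlr /= pair_bigA /=; apply: eq_bigr => t _.
rewrite exprMn; ring.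
Qed.

Lemma GS_scale (c : K) {a} : GS a -> GS (fun n => c * a n).
Proof. exact: GS_mul (GS_const c). Qed.

Lemma GS_sub {a1 a2} : GS a1 -> GS a2 -> GS (fun n => a1 n - a2 n).
Proof.
move=> h1 h2; apply: (GS_ext _ (GS_add h1 (GS_scale (-1) h2))) => n /=.
by rewrite mulN1r.
Qed.

Lemma GS_back {a} : GS a -> exists a', GS a' /\ forall n, a' n.+1 = a n.
Proof.
move=> [I [c [y [hy ha]]]]; exists (fun n => \sum_t (c t / y t) * y t ^+ n); split.
  by exists I, (fun t => c t / y t), y.
move=> n; rewrite ha; apply: eq_bigr => t _.
have := hy t => ?; rewrite exprS; by fld.
Qed.

Lemma GS_lin a k l : GS a -> GS (fun n => a (k * n + l)%N).
Proof.
move=> [I [c [y [hy ha]]]]; exists I, (fun t => c t * y t ^+ l), (fun t => y t ^+ k).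
split; first by move=> t; apply: expf_neq0.
move=> n; rewrite ha; apply: eq_bigr => t _.
by rewrite exprD exprM -exprM mulnC exprM mulrAC -mulrA.
Qed.

Lemma sum_enum (I : finType) (F : I -> K) : \sum_t F t = \sum_(k < #|I|) F (enum_val k).
Proof. rewrite -big_enum_val. apply: eq_bigl => t. by rewrite inE. Qed.

Lemma hankel_GS a : GS a -> exists N, forall n, (N <= n)%N ->
  \det (\matrix_(i < n.+1, j < n.+1) a (i + j)%N) = 0.
Proof.
move=> [I [c [y [_ ha]]]]; exists #|I| => n hn.
set A := \matrix_(i < n.+1, k < #|I|) (c (enum_val k) * y (enum_val k) ^+ i).
set B := \matrix_(k < #|I|, j < n.+1) (y (enum_val k) ^+ j).
have -> : \matrix_(i < n.+1, j < n.+1) a (i + j)%N = A *m B.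
  apply/matrixP => i j; rewrite !mxE ha.
  rewrite sum_enum.
  apply: eq_bigr => k _; rewrite /A /B !mxE exprD; exact: mulrA.
apply/eqP; apply: contraT => hd.
have : (A *m B) \in unitmx by rewrite unitmxE unitfE.
move/mxrank_unit => hr.
have := mxrankM_maxl A B; rewrite hr => h1.
have := rank_leq_col A => h2.
by have := leq_trans h1 h2; rewrite ltnNge hn.
Qed.

Lemma qpSg a b n : qp a b n.+1 = qp a b n * (1 - b ^+ n * a).
Proof. by rewrite /qp big_ord_recr. Qed.
Lemma qp0g a b : qp a b 0 = 1.
Proof. by rewrite /qp big_ord0. Qed.

Lemma par n : exists k, n = k.*2 \/ n = (k.*2).+1.
Proof.
exists n./2; have e := odd_double_half n.
case: (odd n) e => /= e; [right|left]; by rewrite -{1}e ?add1n ?add0n.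
Qed.

Section Main.
Variable x : K.
Hypothesis hx0 : x != 0.
Hypothesis hxm : forall k, (0 < k)%N -> 1 - x ^+ k != 0.
Hypothesis hxp : forall k, (0 < k)%N -> 1 + x ^+ k != 0.
Hypothesis h2 : (2 : K) != 0.

Lemma hx2 k : (0 < k)%N -> 1 - (x ^+ 2) ^+ k != 0.
Proof. by move=> k0; rewrite -exprM; apply: hxm; rewrite muln_gt0. Qed.

Definition fK n s := H (x ^+ 2) n s / qp (- x) x n.
Definition FK n s := H x n (- s) / qp x (x ^+ 2) (n.+1)./2.

Local Notation P := (qp (- x) x).
Lemma PS n : P n.+1 = P n * (1 + x ^+ n.+1).
Proof. by rewrite qpSg mulrN opprK exprSr. Qed.
Lemma P_neq0 n : P n != 0.
Proof. elim: n => [|n IH]; first by rewrite qp0g oner_eq0.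
rewrite PS; apply: mulf_neq0; [exact: IH | exact: hxp]. Qed.

Lemma f0 s : fK 0 s = 1.
Proof. by rewrite /fK (H0 _ hx2) qp0g divr1. Qed.

Lemma fshift n s : fK n.+1 (x ^+ 2 * s) = fK n.+1 s - s * (1 - x ^+ n.+1) * fK n s.
Proof.
rewrite /fK (Hshift _ hx2) PS.
have -> : (x ^+ 2) ^+ n.+1 = x ^+ n.+1 * x ^+ n.+1 by rewrite -exprM mulnC exprM expr2.
have := P_neq0 n; have := @hxp _ (ltn0Sn n) => *.
by fld.
Qed.

Lemma fbase n : fK n x = 1.
Proof.
suff [e _] : H (x ^+ 2) n x = P n /\ H (x ^+ 2) n.+1 x = P n.+1.
  by rewrite /fK e divff //; exact: P_neq0.
elim: n => [|n [IH1 IH2]].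
  by rewrite (Hpascal _ hx2) !(H0 _ hx2) PS qp0g expr1 mulr1 mul1r.
split=> //; rewrite (Hpascal _ hx2) (Hshift _ hx2) IH1 IH2 !PS.
have -> : (x ^+ 2) ^+ n.+1 = x ^+ n.+1 * x ^+ n.+1 by rewrite -exprM mulnC exprM expr2.
rewrite [x ^+ n.+2]exprS; ring.
Qed.

Lemma fsym n s : s != 0 -> fK n s^-1 = s^-1 ^+ n * fK n s.
Proof.
move=> s0; rewrite /fK -(Hsym _ n s s0) exprVn.
have := expf_neq0 n s0; have := P_neq0 n => *; by fld.
Qed.

Local Notation Q2 := (qp x (x ^+ 2)).
Definition w m : K := if odd m then 1 else 1 - x ^+ m.

Lemma Q2S k : Q2 k.+1 = Q2 k * (1 - x ^+ (k.*2).+1).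
Proof. by rewrite qpSg -exprM -exprSr mul2n. Qed.
Lemma Q2_neq0 k : Q2 k != 0.
Proof. elim: k => [|k IH]; first by rewrite qp0g oner_eq0.
rewrite Q2S; apply: mulf_neq0; [exact: IH | exact: hxm]. Qed.

Lemma D_even k : Q2 (k.*2).+1./2 = Q2 k.
Proof. by rewrite -uphalfE uphalf_double. Qed.
Lemma D_odd k : Q2 (k.*2).+2./2 = Q2 k.+1.
Proof. by rewrite -doubleS half_double. Qed.
Lemma D_neq0 n : Q2 n.+1./2 != 0.
Proof. exact: Q2_neq0. Qed.

Lemma D_rel n : (1 - x ^+ n.+1) * Q2 n.+1./2 = w n.+1 * Q2 n.+2./2.
Proof.
have [k [->|->]] := par n.
  rewrite D_even D_odd Q2S /w /= odd_double /= mul1r; ring.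
rewrite -doubleS D_even D_odd /w odd_double //.
Qed.

Lemma F0 s : FK 0 s = 1.
Proof. by rewrite /FK (H0 _ hxm) /= qp0g divr1. Qed.

Lemma Fshift n s : FK n.+1 (x * s) = FK n.+1 s + s * w n.+1 * FK n s.
Proof.
rewrite /FK -mulrN (Hshift _ hxm).
have e := D_rel n.
have eW : w n.+1 = (1 - x ^+ n.+1) * Q2 n.+1./2 / Q2 n.+2./2.
  by rewrite e mulfK //; exact: D_neq0.
rewrite eW.
have := D_neq0 n; have := D_neq0 n.+1 => *; by fld.
Qed.

Lemma Fbase n : FK n 1 = if odd n then 0 else 1.
Proof.
have rec m : H x m.+2 (-1) = (1 - x ^+ m.+1) * H x m (-1).
  rewrite (Hpascal _ hxm) (Hshift _ hxm); ring.
have [k [->|->]] := par n; rewrite /FK ?D_even ?D_odd /= ?odd_double /=.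
  suff -> : H x k.*2 (-1) = Q2 k by rewrite divff //; exact: Q2_neq0.
  elim: k => [|k IH]; first by rewrite (H0 _ hxm) qp0g.
  by rewrite doubleS rec IH Q2S mulrC.
suff -> : H x (k.*2).+1 (-1) = 0 by rewrite mul0r.
elim: k => [|k IH].
  rewrite (Hpascal _ hxm) !(H0 _ hxm); ring.
by rewrite doubleS rec IH mulr0.
Qed.

Lemma Fsym n s : s != 0 -> FK n s^-1 = (- s)^-1 ^+ n * FK n s.
Proof.
move=> s0; have s0' : - s != 0 by rewrite oppr_eq0.
rewrite /FK -invrN -(Hsym _ n (- s) s0') exprVn.
have := expf_neq0 n s0'; have := D_neq0 n => *; by fld.
Qed.

Lemma nx0 : - x != 0.
Proof. by rewrite oppr_eq0. Qed.

Lemma w_GS : GS w.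
Proof.
have G1 := GS_geom (2^-1) x hx0; have G2 := GS_geom (2^-1) (- x) nx0.
apply: (GS_ext _ (GS_sub (GS_sub (GS_const 1) G1) G2)) => n /=.
rewrite /w exprNn -signr_odd; case: (odd n); rewrite ?expr1 ?expr0; by fld.
Qed.

Lemma e0_GS : GS (fun n => if odd n then 0 else 1).
Proof.
have n1 : (-1 : K) != 0 by rewrite oppr_eq0 oner_eq0.
have G1 := GS_geom (2^-1) 1 (oner_neq0 K); have G2 := GS_geom (2^-1) (-1) n1.
apply: (GS_ext _ (GS_add G1 G2)) => n /=.
rewrite expr1n -signr_odd; case: (odd n); rewrite ?expr1 ?expr0; by fld.
Qed.

Lemma fGSpos k : GS (fun n => fK n (x ^+ (2 * k + 1))).
Proof.
elim: k => [|k IH].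
  by apply: (GS_ext _ (GS_const 1)) => n; rewrite muln0 add0n expr1 fbase.
set s := x ^+ (2 * k + 1).
have [a' [Ga' ea']] := GS_back IH.
have G1 : GS (fun n => s * (1 - x ^+ n) * a' n).
  apply: GS_mul Ga'; apply: GS_scale.
  apply: (GS_ext _ (GS_sub (GS_const 1) (GS_geom 1 x hx0))) => n /=; by rewrite mul1r.
apply: (GS_ext _ (GS_sub IH G1)) => n /=.
have -> : x ^+ (2 * k.+1 + 1) = x ^+ 2 * s by rewrite -exprD mulnS.
case: n => [|n]; first by rewrite !f0 expr0 subrr mulr0 mul0r subr0.
by rewrite fshift ea'.
Qed.

Lemma FGSpos k : GS (fun n => FK n (x ^+ k)).
Proof.
elim: k => [|k IH].
  apply: (GS_ext _ e0_GS) => n; by rewrite expr0 Fbase.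
set s := x ^+ k.
have [a' [Ga' ea']] := GS_back IH.
have G1 : GS (fun n => s * w n * a' n).
  apply: GS_mul Ga'; apply: GS_scale; exact: w_GS.
apply: (GS_ext _ (GS_add IH G1)) => n /=.
rewrite exprS.
case: n => [|n]; first by rewrite !F0 /w /= expr0 subrr mulr0 mul0r addr0.
by rewrite Fshift ea'.
Qed.

Lemma fGS (m : int) : GS (fun n => fK n (x ^ (2 * m + 1))).
Proof.
case: m => k.
  have e : (2 * Posz k + 1)%R = Posz (2 * k + 1)%N by rewrite PoszD PoszM.
  by apply: (GS_ext _ (fGSpos k)) => n; rewrite e.
have e : (2 * Negz k + 1)%R = - Posz (2 * k + 1)%N by rewrite NegzE; lia.
rewrite e -exprnN.
set s := x ^+ (2 * k + 1).
have s0 : s != 0 by apply: expf_neq0.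
have si : s^-1 != 0 by rewrite invr_eq0.
apply: (GS_ext _ (GS_mul (GS_geom 1 _ si) (fGSpos k))) => n /=.
by rewrite fsym // mul1r.
Qed.

Lemma FGS (m : int) : GS (fun n => FK n (x ^ m)).
Proof.
case: m => k.
  by apply: (GS_ext _ (FGSpos k)).
rewrite NegzE -exprnN.
set s := x ^+ k.+1.
have s0 : s != 0 by apply: expf_neq0.
have si : (- s)^-1 != 0 by rewrite invr_eq0 oppr_eq0.
apply: (GS_ext _ (GS_mul (GS_geom 1 _ si) (FGSpos k.+1))) => n /=.
by rewrite Fsym // mul1r.
Qed.
End Main.
End Gen.


Lemma qX k : q ^+ k = tofrac ('X^k : {poly rat}).
Proof. by rewrite /q rmorphXn. Qed.

Lemma q_neq0 : q != 0.
Proof. by rewrite /q tofrac_eq0 polyX_eq0. Qed.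

Lemma qpow_neq0 k : q ^+ k != 0.
Proof. by rewrite expf_neq0 // q_neq0. Qed.

Lemma oneBq k : (0 < k)%N -> 1 - q ^+ k != 0.
Proof.
move=> k0; rewrite qX -(rmorph1 (@tofrac {poly rat})) -rmorphB tofrac_eq0.
apply/eqP => /(congr1 (fun p : {poly rat} => p`_0)).
by rewrite coefB coef1 coefXn; case: k k0 => // k _ /=; rewrite ?subr0 ?addr0 coef0 => /eqP; rewrite oner_eq0.
Qed.

Lemma oneDq k : (0 < k)%N -> 1 + q ^+ k != 0.
Proof.
move=> k0; rewrite qX -(rmorph1 (@tofrac {poly rat})) -rmorphD tofrac_eq0.
apply/eqP => /(congr1 (fun p : {poly rat} => p`_0)).
by rewrite coefD coef1 coefXn; case: k k0 => // k _ /=; rewrite ?subr0 ?addr0 coef0 => /eqP; rewrite oner_eq0.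
Qed.

Lemma two_neq0 : (2 : Qq) != 0.
Proof.
rewrite -(rmorph_nat (@tofrac {poly rat})) tofrac_eq0 -polyC_natr polyC_eq0 //.
Qed.


Theorem corollary3p1 (m : int) :
  exists N : nat, forall n : nat, (N <= n)%N ->
    [/\ \det (\matrix_(i < n.+1, j < n.+1) f (i + j)%N (q ^ (2 * m + 1))) = 0,
        \det (\matrix_(i < n.+1, j < n.+1) F (2 * i + 2 * j)%N (q ^ m)) = 0,
        \det (\matrix_(i < n.+1, j < n.+1) F (2 * i + 2 * j + 1)%N (q ^ m)) = 0
      & \det (\matrix_(i < n.+1, j < n.+1) F (i + j)%N (q ^ m)) = 0].
Proof.
have G1 : @GS Qq (fun n => @fK Qq q n (q ^ (2 * m + 1))).
  by apply: fGS; [exact: q_neq0 | exact: oneBq | exact: oneDq | exact: two_neq0].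
have G4 : @GS Qq (fun n => @FK Qq q n (q ^ m)).
  by apply: FGS; [exact: q_neq0 | exact: oneBq | exact: two_neq0].
have G2 := @GS_lin _ _ 2 0 G4.
have G3 := @GS_lin _ _ 2 1 G4.
have [N1 H1] := @hankel_GS _ _ G1.
have [N2 H2] := @hankel_GS _ _ G2.
have [N3 H3] := @hankel_GS _ _ G3.
have [N4 H4] := @hankel_GS _ _ G4.
exists (maxn N1 (maxn N2 (maxn N3 N4))) => n.
rewrite !geq_max => /and4P [h1 h2 h3 h4]; split.
- exact: H1 h1.
- have -> : \matrix_(i < n.+1, j < n.+1) F (2 * i + 2 * j)%N (q ^ m)
     = \matrix_(i < n.+1, j < n.+1) (fun k => @FK Qq q (2 * k + 0)%N (q ^ m)) (i + j)%N.
    apply/matrixP => i j; rewrite !mxE addn0 mulnDr. reflexivity.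
  exact: H2 h2.
- have -> : \matrix_(i < n.+1, j < n.+1) F (2 * i + 2 * j + 1)%N (q ^ m)
     = \matrix_(i < n.+1, j < n.+1) (fun k => @FK Qq q (2 * k + 1)%N (q ^ m)) (i + j)%N.
    apply/matrixP => i j; rewrite !mxE mulnDr. reflexivity.
  exact: H3 h3.
- exact: H4 h4.
Qed.
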